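(* For all $n\ge 2$, $f_n=g_{n-1}-g_{n-2}$.
   Context: For $x\in S_n$, $\mathrm{ind}_x(a)$ is the position of the value $a$ in $x$, and $\mathrm{small}_{k}(x)$ is the subsequence of $x$ formed by the entries $1,\dots,k$. An occurrence of the bivincular pattern $123^{\star}$ in $x$ is a pair of indices $a<b<n$ with $x_a<x_b$ and $x_{b+1}=x_b+1$. Let $g_n=|\mathrm{Av}_n(132,123^{\star})|$ be the number of permutations in $S_n$ avoiding both the classical pattern $132$ and $123^{\star}$ (with $g_0=1$), and let $f_n$ be the number of $x\in S_n$ avoiding $132$ such that $\mathrm{ind}_x(n)-1=\mathrm{ind}_x(n-1)>1$ and $\mathrm{small}_{n-1}(x)$ avoids $123^{\star}$. *)

(* Defs.v *)
From mathcomp Require Import all_boot all_order all_algebra.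
Set Implicit Arguments. Unset Strict Implicit. Unset Printing Implicit Defensive.

(* Positions are 1-indexed in the
   paper; here nth is 0-indexed, which does not matter for pattern
   conditions stated via relative order of indices. *)

Definition perms (n : nat) : seq (seq nat) := permutations (iota 1 n).

Definition contains132 (s : seq nat) : bool :=
  [exists i : 'I_(size s), exists j : 'I_(size s), exists k : 'I_(size s),
     (i < j < k) && (nth 0 s i < nth 0 s k < nth 0 s j)].

Definition avoids132 (s : seq nat) : bool := ~~ contains132 s.

Definition has123star (s : seq nat) : bool :=
  [exists a : 'I_(size s), exists b : 'I_(size s),
     [&& a < b, b.+1 < size s, nth 0 s a < nth 0 s b
       & nth 0 s b.+1 == (nth 0 s b).+1]].

Definition avoids123star (s : seq nat) : bool := ~~ has123star s.

Definition ind (x : seq nat) (a : nat) : nat := (index a x).+1.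

Definition small (k : nat) (x : seq nat) : seq nat := [seq v <- x | v <= k].

Definition g (n : nat) : nat :=
  size [seq x <- perms n | avoids132 x && avoids123star x].

Definition f (n : nat) : nat :=
  size [seq x <- perms n |
         [&& avoids132 x,
             (ind x n).-1 == ind x n.-1,
             1 < ind x n.-1
           & avoids123star (small n.-1 x)]].

(* Main.v *)
Require Import Defs.
From mathcomp Require Import all_boot all_order all_algebra.
From mathcomp Require Import zify.
Set Implicit Arguments. Unset Strict Implicit. Unset Printing Implicit Defensive.

Lemma sub_nth_inv (x : nat) w s : subseq (x :: w) s ->
  exists i, [/\ i < size s, nth 0 s i = x & subseq w (drop i.+1 s)].
Proof.
elim: s => [|y s IH] //=.
case: eqP => [<- H | _ H].
  by exists 0; rewrite drop0.
have [i [H1 H2 H3]] := IH H.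
by exists i.+1.
Qed.

Lemma sub_nth_cons s i w : i < size s -> subseq w (drop i.+1 s) ->
  subseq (nth 0 s i :: w) s.
Proof.
elim: s i => [|y s IH] [|i] //= Hi Hw.
  by rewrite eqxx drop0 in Hw *.
case: ifP => _; last exact: IH.
apply: subseq_trans (subseq_cons _ _) (IH i Hi Hw).
Qed.

Definition C132 (s : seq nat) :=
  exists a b c, subseq [:: a; b; c] s /\ a < c < b.

Lemma contains132P s : reflect (C132 s) (contains132 s).
Proof.
apply: (iffP idP).
  case/existsP => -[i Hi] /existsP [[j Hj] /existsP [[k Hk] /andP [/andP [/= Hij Hjk] /= Hv]]].
  exists (nth 0 s i), (nth 0 s j), (nth 0 s k); split => //.
  apply: sub_nth_cons => //.
  have -> : nth 0 s j = nth 0 (drop i.+1 s) (j - i.+1) by rewrite nth_drop; congr nth; lia.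
  apply: sub_nth_cons.
    rewrite size_drop; move: Hj; set n := size s; lia.
  rewrite drop_drop sub1seq.
  have -> : nth 0 s k = nth 0 (drop ((j - i.+1).+1 + i.+1) s) (k - j.+1).
    rewrite nth_drop; congr nth; lia.
  apply: mem_nth; rewrite size_drop; move: Hk; set n := size s; lia.
case=> a [b [c [Hs Hv]]].
have [i [Hi Ha Hw]] := sub_nth_inv Hs.
have [j [Hj Hb Hw2]] := sub_nth_inv Hw.
have [k [Hk Hc _]] := sub_nth_inv Hw2.
rewrite size_drop in Hj; rewrite drop_drop !size_drop in Hk.
rewrite nth_drop in Hb; rewrite drop_drop nth_drop in Hc.
move: Hi Hj Hk; set n := size s => Hi Hj Hk.
apply/existsP; exists (Ordinal Hi).
have Hj' : i.+1 + j < n by lia.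
apply/existsP; exists (Ordinal Hj').
have Hk' : (j.+1 + i.+1) + k < n by lia.
apply/existsP; exists (Ordinal Hk').
rewrite /= Ha Hb Hc Hv andbT; apply/andP; split; lia.
Qed.

Lemma has123P s : reflect (exists a b, [/\ a < b, b.+1 < size s,
   nth 0 s a < nth 0 s b & nth 0 s b.+1 = (nth 0 s b).+1]) (has123star s).
Proof.
apply: (iffP idP).
  case/existsP => -[a Ha] /existsP [[b Hb] /and4P [/= H1 H2 H3 /eqP H4]].
  by exists a, b.
case=> a [b [H1 H2 H3 H4]].
move: H2; set n := size s => H2.
have Hb : b < n by lia.
have Ha : a < n by lia.
apply/existsP; exists (Ordinal Ha); apply/existsP; exists (Ordinal Hb).
by rewrite /= H1 H3 H4 eqxx /n H2.
Qed.

Lemma c132_cons m z : (forall v, v \in z -> v < m) ->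
  contains132 (m :: z) = contains132 z.
Proof.
move=> Hz; apply/contains132P/contains132P.
  case=> a [b [c [Hs Hv]]].
  move: Hs => /=; case: eqP => [Ham Hs | _ Hs].
    have Hc : c \in z by apply: (mem_subseq Hs); rewrite !inE eqxx orbT.
    have := Hz c Hc; lia.
  by exists a, b, c.
case=> a [b [c [Hs Hv]]].
exists a, b, c; split => //; exact: subseq_trans Hs (subseq_cons _ _).
Qed.

Lemma h123_cons m z : (forall v, v \in z -> v < m) ->
  has123star (m :: z) = has123star z.
Proof.
move=> Hz; apply/has123P/has123P.
  case=> a [b [H1 H2 H3 H4]].
  case: b H1 H2 H3 H4 => [|b] // H1 H2 H3 H4.
  case: a H1 H3 => [|a] H1 H3.
    have : nth 0 z b \in z by apply: mem_nth; move: H2; rewrite /= ltnS => /ltnW.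
    move/Hz; simpl in H3; lia.
  exists a, b; split => //.
case=> a [b [H1 H2 H3 H4]].
by exists a.+1, b.+1.
Qed.

Lemma split_uniq (v : nat) S1 T1 S2 T2 : v \notin S1 -> v \notin S2 ->
  S1 ++ v :: T1 = S2 ++ v :: T2 -> S1 = S2 /\ T1 = T2.
Proof.
move=> h1 h2 E.
have Hs : size S1 = size S2.
  by have := congr1 (index v) E; rewrite !index_cat (negbTE h1) (negbTE h2) /= eqxx !addn0.
by move/eqP: E; rewrite eqseq_cat // => /andP [/eqP -> /eqP [->]].
Qed.

Lemma sub_split (x : nat) w s : subseq (x :: w) s ->
  exists s1 s2, s = s1 ++ x :: s2 /\ subseq w s2.
Proof.
elim: s => [|y s IH] //=.
case: eqP => [<- H | _ H].
  by exists [::], s.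
have [s1 [s2 [-> H2]]] := IH H.
by exists (y :: s1), s2.
Qed.

Lemma uniq_mid (v : nat) S T : uniq (S ++ v :: T) -> v \notin S /\ v \notin T.
Proof.
by rewrite cat_uniq /= negb_or => /and3P [_ /andP [H _] /andP [H2 _]].
Qed.

Lemma c132_ins m A B : uniq (A ++ m :: B) -> all (fun v => v <= m) (A ++ m :: B) ->
  contains132 (A ++ m :: m.+1 :: B) = contains132 (A ++ m :: B).
Proof.
set y := A ++ m :: B; set x := A ++ m :: m.+1 :: B => Uy Ally.
have Hperm : perm_eq x (y ++ [:: m.+1]).
  rewrite /x /y -!catA perm_cat2l /= perm_cons.
  by rewrite -cat1s perm_catC.
have Hny : m.+1 \notin y by apply/negP => /(allP Ally); rewrite ltnn.
have Ux : uniq x by rewrite (perm_uniq Hperm) cats1 rcons_uniq Hny Uy.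
have HyF : [seq v <- x | v != m.+1] = y.
  have : all (fun v => v != m.+1) y.
    by apply/allP => v Hv; apply/eqP => E; rewrite -E Hv in Hny.
  rewrite /y all_cat /= => /and3P [HA Hm HB].
  rewrite filter_cat /= Hm eqxx /=.
  by rewrite (all_filterP HA) (all_filterP HB).
have Hmy : m \notin B by have [] := uniq_mid Uy.
have HmA : m \notin A by have [] := uniq_mid Uy.
apply/contains132P/contains132P.
  case=> a [b [c [Hs /andP [Hac Hcb]]]].
  have Hbx : b \in x by apply: (mem_subseq Hs); rewrite !inE eqxx orbT.
  case: (eqVneq b m.+1) => Hb.
    subst b.
    have [s1 [s2 [E1 Hs2]]] := sub_split Hs.
    have [t1 [t2 [E2 Hs3]]] := sub_split Hs2.
    rewrite sub1seq in Hs3.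
    have E : (A ++ [:: m]) ++ m.+1 :: B = (s1 ++ a :: t1) ++ m.+1 :: t2.
      by rewrite -!catA /= -E2 -E1.
    have N1 : m.+1 \notin A ++ [:: m].
      rewrite mem_cat inE negb_or; apply/andP; split.
        by apply/negP => H; rewrite /y mem_cat H in Hny.
      by rewrite neq_ltn ltnSn orbT.
    have N2 : m.+1 \notin s1 ++ a :: t1.
      have U2 : uniq ((s1 ++ a :: t1) ++ m.+1 :: t2) by rewrite -E -catA.
      by have [] := uniq_mid U2.
    have [EA EB] := split_uniq N1 N2 E.
    have Ha : a \in A ++ [:: m] by rewrite EA mem_cat inE eqxx orbT.
    have Hc : c \in B by rewrite EB.
    have Hcm : c <= m by apply: (allP Ally); rewrite /y mem_cat inE Hc !orbT.
    have Hcm' : c != m by apply/eqP => E3; rewrite -E3 Hc in Hmy.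
    have Hcm2 : c < m by rewrite ltn_neqAle Hcm' Hcm.
    have HaA : a \in A.
      move: Ha; rewrite mem_cat inE => /orP [] // /eqP E3.
      by move: (ltn_trans Hac Hcm2); rewrite E3 ltnn.
    exists a, m, c; split; last by rewrite Hac Hcm2.
    rewrite /y -cat1s; apply: cat_subseq; first by rewrite sub1seq.
    by rewrite /= eqxx sub1seq.
  have Hby : b \in y by move: Hbx; rewrite (perm_mem Hperm) mem_cat inE (negbTE Hb) orbF.
  have Hbm : b <= m by apply: (allP Ally).
  exists a, b, c; split; last by rewrite Hac Hcb.
  rewrite -HyF subseq_filter Hs andbT /= Hb andbT.
  have Hc1 : c < m := leq_trans Hcb Hbm.
  have Ha1 : a < m := ltn_trans Hac Hc1.
  by apply/andP; split; rewrite neq_ltn ltnS ltnW.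
case=> a [b [c [Hs Hv]]].
exists a, b, c; split => //; apply: subseq_trans Hs _.
rewrite /y /x; apply: cat_subseq => //.
rewrite -cat1s -[m :: m.+1 :: B]cat1s; apply: cat_subseq => //; exact: subseq_cons.
Qed.

Definition ins m (y : seq nat) :=
  take (index m y) y ++ m :: m.+1 :: drop (index m y).+1 y.

Lemma ins_eq m A B : m \notin A -> ins m (A ++ m :: B) = A ++ m :: m.+1 :: B.
Proof.
move=> HmA; rewrite /ins index_cat (negbTE HmA) /= eqxx addn0.
rewrite take_size_cat // drop_cat ltnNge leqnSn /= subSnn /=.
by rewrite drop0.
Qed.

Lemma iotaS1 m : iota 1 m.+1 = iota 1 m ++ [:: m.+1].
Proof. by rewrite -[m.+1]addn1 iotaD add1n addn1. Qed.

Lemma perm_ins m A B : perm_eq (A ++ m :: m.+1 :: B) ((A ++ m :: B) ++ [:: m.+1]).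
Proof.
rewrite -!catA perm_cat2l /= perm_cons.
by rewrite -cat1s perm_catC.
Qed.

Lemma perm_facts m y : perm_eq y (iota 1 m) ->
  [/\ uniq y, all (fun v => v <= m) y & 0 < m -> m \in y].
Proof.
move=> H; split.
- by rewrite (perm_uniq H) iota_uniq.
- by apply/allP => v; rewrite (perm_mem H) mem_iota add1n ltnS => /andP [].
- by move=> Hm; rewrite (perm_mem H) mem_iota add1n ltnSn Hm.
Qed.

Definition Pf n (x : seq nat) :=
  [&& avoids132 x,
             (ind x n).-1 == ind x n.-1,
             1 < ind x n.-1
           & avoids123star (small n.-1 x)].

Definition Q m (y : seq nat) :=
  [&& avoids132 y, avoids123star y & index m y != 0].

Lemma fE n : f n = size [seq x <- perms n | Pf n x].
Proof. by []. Qed.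

Lemma struct m A B : perm_eq (A ++ m :: B) (iota 1 m) ->
  [/\ perm_eq (A ++ m :: m.+1 :: B) (iota 1 m.+1),
      small m (A ++ m :: m.+1 :: B) = A ++ m :: B,
      ins m (A ++ m :: B) = A ++ m :: m.+1 :: B &
      Pf m.+1 (A ++ m :: m.+1 :: B) = Q m (A ++ m :: B)].
Proof.
move=> H; have [Uy Ally _] := perm_facts H.
have [HmA _] := uniq_mid Uy.
move: (Ally); rewrite all_cat /= => /and3P [AllA _ AllB].
have Hm1A : m.+1 \notin A.
  by apply/negP => /(allP AllA); rewrite ltnn.
have Hsmall : small m (A ++ m :: m.+1 :: B) = A ++ m :: B.
  rewrite /small filter_cat /= leqnn ltnn.
  by rewrite (all_filterP AllA) (all_filterP AllB).
have Hp : perm_eq (A ++ m :: m.+1 :: B) (iota 1 m.+1).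
  by rewrite (iotaS1 m) (permPl (perm_ins m A B)) perm_cat2r.
split => //; first exact: ins_eq.
rewrite /Pf /Q /= Hsmall /avoids132 c132_ins // /ind /=.
rewrite !index_cat (negbTE HmA) (negbTE Hm1A) /= eqxx ?(gtn_eqF (ltnSn m)) ?(ltn_eqF (ltnSn m)) ?eqxx.
rewrite !addn0 addn1 eqxx /= ltnS lt0n.
by case: (size A == 0); rewrite ?andbF ?andbT.
Qed.

Lemma decompy m y : perm_eq y (iota 1 m) -> 0 < m -> exists A B, y = A ++ m :: B.
Proof.
move=> H Hm; have [_ _ Hin] := perm_facts H.
by case/splitPr: (Hin Hm) => A B; exists A, B.
Qed.

Lemma decompx m x : perm_eq x (iota 1 m.+1) -> Pf m.+1 x -> 0 < m ->
  exists A B, x = A ++ m :: m.+1 :: B.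
Proof.
move=> Hx /and4P [_ Hind _ _] Hm.
have [Ux _ Hmem] := perm_facts Hx.
have Hmx : m \in x by rewrite (perm_mem Hx) mem_iota Hm /= add1n ltnS leqnSn.
have Hm1x : m.+1 \in x := Hmem isT.
move: Hind; rewrite /ind /= => Hind.
move: Ux Hm1x Hind; case/splitPr: Hmx => A p2 Ux Hm1x Hind.
have [HmA _] := uniq_mid Ux.
move: Hind; rewrite !index_cat (negbTE HmA) /= eqxx addn0.
case: ifP => Hm1A.
  have := index_mem m.+1 A; rewrite Hm1A => Hlt /eqP E.
  by rewrite E ltnNge leqnSn in Hlt.
rewrite (ltn_eqF (ltnSn m)) addnS eqSS -{2}[size A]addn0 eqn_add2l.
case: p2 Ux Hm1x => [|v B] Ux Hm1x.
  by move: Hm1x; rewrite mem_cat Hm1A inE (gtn_eqF (ltnSn m)).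
case: (eqVneq v m.+1) => [-> | Hne]; first by exists A, B.
by rewrite /= (negbTE Hne).
Qed.

Lemma claim1 m : 0 < m -> f m.+1 = count (Q m) (perms m).
Proof.
move=> Hm; rewrite fE -size_filter.
rewrite -[size [seq y <- perms m | Q m y]](size_map (ins m)); apply: perm_size; apply: uniq_perm.
- apply: filter_uniq; exact: permutations_uniq.
- rewrite map_inj_in_uniq; first by apply: filter_uniq; exact: permutations_uniq.
  move=> y1 y2; rewrite !mem_filter !mem_permutations => /andP [_ H1] /andP [_ H2] E.
  have [A1 [B1 E1]] := decompy H1 Hm; have [A2 [B2 E2]] := decompy H2 Hm.
  subst y1 y2; have [_ S1 I1 _] := struct H1; have [_ S2 I2 _] := struct H2.
  by rewrite -S1 -S2 -I1 -I2 E.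
- move=> x; rewrite mem_filter mem_permutations; apply/andP/mapP.
  + case=> HP Hx; have [A [B E]] := decompx Hx HP Hm; subst x.
    have Hy : perm_eq (A ++ m :: B) (iota 1 m).
      by rewrite -(perm_cat2r [:: m.+1]) -iotaS1 -(permPl (perm_ins m A B)).
    have [_ _ I P] := struct Hy.
    exists (A ++ m :: B); last by rewrite I.
    by rewrite mem_filter mem_permutations Hy -P HP.
  + case=> y; rewrite mem_filter mem_permutations => /andP [HQ Hy] ->.
    have [A [B E]] := decompy Hy Hm; subst y.
    have [Hp _ I P] := struct Hy; by rewrite I P HQ Hp.
Qed.

Definition Bp (y : seq nat) := avoids132 y && avoids123star y.

Lemma claim3 m : count (predI (fun y => index m.+1 y == 0) Bp) (perms m.+1) = g m.
Proof.
rewrite /g -size_filter -(size_map (cons m.+1)); apply: perm_size; apply: uniq_perm.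
- apply: filter_uniq; exact: permutations_uniq.
- rewrite map_inj_uniq; first by apply: filter_uniq; exact: permutations_uniq.
  by move=> a b [].
move=> y; rewrite mem_filter mem_permutations; apply/idP/mapP.
  case/andP => /andP [HR HB] Hy.
  case: y HR HB Hy => [|v z] HR HB Hy.
    by move/perm_size: Hy; rewrite size_iota.
  case: (eqVneq v m.+1) HR => [Ev _ | Hne]; last by rewrite /= (negbTE Hne).
  subst v.
  have Hz : perm_eq z (iota 1 m).
    by rewrite iotaS1 perm_sym perm_catC /= perm_cons perm_sym in Hy.
  have [_ Allz _] := perm_facts Hz.
  have Hlt : forall v, v \in z -> v < m.+1 by move=> v /(allP Allz).
  move: HB; rewrite /Bp /avoids132 /avoids123star c132_cons // h123_cons // => HB.
  exists z => //; by rewrite mem_filter mem_permutations HB Hz.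
case=> z; rewrite mem_filter mem_permutations => /andP [HB Hz] ->.
have [_ Allz _] := perm_facts Hz.
have Hlt : forall v, v \in z -> v < m.+1 by move=> v /(allP Allz).
have Hp : perm_eq (m.+1 :: z) (iota 1 m.+1).
  by rewrite iotaS1 perm_sym perm_catC /= perm_cons perm_sym.
rewrite Hp andbT /= eqxx /= /Bp /avoids132 /avoids123star c132_cons // h123_cons //.
Qed.

Lemma claim2 m : g m = count (predI (fun y => index m y == 0) Bp) (perms m) + count (Q m) (perms m).
Proof.
rewrite /g -/Bp.
rewrite -(count_predC (fun y => index m y == 0) (filter Bp (perms m))) !count_filter.
congr (_ + _); apply: eq_count => y /=.
by rewrite /Q /Bp; case: (avoids132 y); case: (avoids123star y); case: (index m y == 0).
Qed.

Theorem lemma3p19 (n : nat) : 2 <= n ->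
  ((f n)%:Z = (g (n - 1))%:Z - (g (n - 2))%:Z)%R.
Proof.
case: n => [|[|k]] // _.
rewrite subn1 /= !subSS subn0.
rewrite (claim2 k.+1) claim3 (claim1 (ltn0Sn k)).
by rewrite PoszD [((g k)%:Z + _)%R]GRing.addrC GRing.addrK.
Qed.
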